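(* Let $0<n<\omega$, $k\ge2$, let $(C;\leq_0,\ldots,\leq_{n-1})$ be an $n$-preorder, $A:C\to\bar k$, and $F\in\mathcal{F}_k(n)$. Then $A\in\mathcal{C}(F)$ if and only if $T\leq_hF$ for every $T\in\mathcal{T}_k(n)$ with $T\leq_h (C;\leq_0,\ldots,\leq_{n-1},A)$.
   Context: $\bar k=\{0,\dots,k-1\}$. An $n$-preorder is a set $C$ with preorders $\le_0,\dots,\le_{n-1}$ such that $x\le_{i+1}y$ implies $x\equiv_i y$ (where $\equiv_i$ is the equivalence induced by $\le_i$). Its associated $n$-base is $\mathcal C=(\mathcal C_0,\dots,\mathcal C_{n-1})$, $\mathcal C_i$ = the family of $\le_i$-up subsets of $C$. Restricting to an $\equiv_0$-class $[c]_0$ gives the $(n-1)$-preorder $([c]_0;\le_1,\dots,\le_{n-1})$. Forests/trees: a forest is represented as a finite $F\subseteq\omega^+$ closed under nonempty prefixes, ordered by prefix; a tree as a finite prefix-closed $V\subseteq\omega^*$. For a preorder $Q$, $Q$-forests/trees carry labelings into $Q$, and $(P,c)\le_h(P',c')$ iff there is a monotone $\varphi:P\to P'$ with $c(x)\le c'(\varphi(x))$. $\mathcal T_k(0)=\bar k$ (antichain), $\mathcal T_k(m+1)$ = $\mathcal T_k(m)$-trees with $\le_h$; $\mathcal F_k(n)$ is the set of $\mathcal T_k(n-1)$-forests with $\le_h$. $T\le_h(C;\le_0,\dots,\le_{n-1},A)$ for $(T,t)\in\mathcal T_k(n)$ is defined recursively: for $n=1$, there is a monotone $\varphi:T\to(C;\le_0)$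 with $t(\tau)=A(\varphi(\tau))$ for all $\tau$; for $n>1$, there is a monotone $\varphi:T\to(C;\le_0)$ with $t(\tau)\le_h([\varphi(\tau)]_0;\le_1,\dots,\le_{n-1},A|_{[\varphi(\tau)]_0})$ for all $\tau\in T$. Fine hierarchy: for an $n$-base $\mathcal L=(\mathcal L_0,\dots,\mathcal L_{n-1})$ in a set $S$ (families closed under finite $\cup,\cap$, containing $\emptyset,S$) and $(F,c)\in\mathcal F_k(n)$, an $F$-family over $\mathcal L$ is $\{U_\tau\}_{\tau\in F}$ with $U_\tau\in\mathcal L_0$, $U_{\tau i}\subseteq U_\tau$, $\bigcup U_\tau=S$, together with (if $n>1$) for each $\tau$ a $c(\tau)$-family over the $(n-1)$-base $(\{\tilde U_\tau\cap B:B\in\mathcal L_1\},\dots,\{\tilde U_\tau\cap B:B\in\mathcal L_{n-1}\})$ in $\tilde U_\tau$, where $\tilde U_\tau=U_\tau\setminus\bigcup_{\tau i\in F}U_{\tau i}$ (for trees the same definition with $V\subseteq\omega^*$). It determines $A:S\to\bar k$ if: for $n=1$, $A(x)=c(\tau)$ whenever $x\in\tilde U_\tau$; for $n>1$, for every $\tau$, $A|_{\tilde U_\tau}$ is determined by the $c(\tau)$-family attached to $\tau$. $\mathcal C(F)$ is the set of $A:C\to\bar k$ determined by some $F$-family over the $n$-base $\mathcal C$. *)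

(* Defs.v *)
From mathcomp Require Import all_boot.
Unset Printing Implicit Defensive.

Definition is_tree (V : seq (seq nat)) : Prop :=
  [::] \in V /\ (forall s t : seq nat, s ++ t \in V -> s \in V).

Definition is_forest (F : seq (seq nat)) : Prop :=
  [::] \notin F /\ (forall s t : seq nat, s != [::] -> s ++ t \in F -> s \in F).

(* Q-labelled trees and forests (labels only matter on the nodes). *)
Record ltree (Q : Type) := LTree {
  lt_nodes : seq (seq nat); lt_label : seq nat -> Q; lt_tree : is_tree lt_nodes }.
Record lforest (Q : Type) := LForest {
  lf_nodes : seq (seq nat); lf_label : seq nat -> Q; lf_forest : is_forest lf_nodes }.
Arguments lt_nodes {Q}. Arguments lt_label {Q}. Arguments lt_tree {Q}.
Arguments lf_nodes {Q}. Arguments lf_label {Q}. Arguments lf_forest {Q}.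

Definition hle {Q : Type} (leQ : Q -> Q -> Prop)
  (P : seq (seq nat)) (c : seq nat -> Q) (P' : seq (seq nat)) (c' : seq nat -> Q) : Prop :=
  exists phi : seq nat -> seq nat,
    (forall x, x \in P -> phi x \in P') /\
    (forall x y, x \in P -> y \in P -> prefix x y -> prefix (phi x) (phi y)) /\
    (forall x, x \in P -> leQ (c x) (c' (phi x))).

Fixpoint Tk (k m : nat) : Type :=
  match m with 0 => 'I_k | m'.+1 => ltree (Tk k m') end.

Fixpoint leh (k m : nat) : Tk k m -> Tk k m -> Prop :=
  match m return Tk k m -> Tk k m -> Prop with
  | 0 => fun a b => a = b
  | m'.+1 => fun T T' => hle (leh k m') (lt_nodes T) (lt_label T) (lt_nodes T') (lt_label T')
  end.

Definition hle_TF (k m : nat) (T : ltree (Tk k m)) (F : lforest (Tk k m)) : Prop :=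
  hle (leh k m) (lt_nodes T) (lt_label T) (lf_nodes F) (lf_label F).

Section Preorders.
Variables (C : Type) (le : nat -> C -> C -> Prop).

Definition equiv (i : nat) (x y : C) : Prop := le i x y /\ le i y x.

Definition npreorder (n : nat) : Prop :=
  (forall i, i < n -> (forall x, le i x x) /\
                      (forall x y z, le i x y -> le i y z -> le i x z)) /\
  (forall i, i.+1 < n -> forall x y, le i.+1 x y -> equiv i x y).

Variables (k : nat) (A : C -> 'I_k).

(* T <=_h (D; le j, le (j+1), ..., A|D) for T in T_k(m+1), where D is the
   current subset (an iterated equivalence class) of C. *)
Fixpoint tle_pre (m : nat) : nat -> (C -> Prop) -> Tk k m.+1 -> Prop :=
  match m return nat -> (C -> Prop) -> Tk k m.+1 -> Prop with
  | 0 => fun j D T =>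
      exists phi : seq nat -> C,
        (forall x, x \in lt_nodes T -> D (phi x)) /\
        (forall x y, x \in lt_nodes T -> y \in lt_nodes T -> prefix x y ->
                     le j (phi x) (phi y)) /\
        (forall x, x \in lt_nodes T -> lt_label T x = A (phi x))
  | m'.+1 => fun j D T =>
      exists phi : seq nat -> C,
        (forall x, x \in lt_nodes T -> D (phi x)) /\
        (forall x y, x \in lt_nodes T -> y \in lt_nodes T -> prefix x y ->
                     le j (phi x) (phi y)) /\
        (forall x, x \in lt_nodes T ->
           tle_pre m' j.+1 (fun y => D y /\ equiv j (phi x) y) (lt_label T x))
  end.

Definition tle (n : nat) (T : ltree (Tk k n.-1)) : Prop :=
  tle_pre (n.-1) 0 (fun _ => True) T.

Definition upbase (i : nat) (X : C -> Prop) : Prop :=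
  forall x y, X x -> le i x y -> X y.

Definition relbase (L : nat -> (C -> Prop) -> Prop) (W : C -> Prop)
  (i : nat) (X : C -> Prop) : Prop :=
  exists B, L i.+1 B /\ forall x, X x <-> W x /\ B x.

Definition tilde (P : seq (seq nat)) (U : seq nat -> C -> Prop) (t : seq nat) (x : C) : Prop :=
  U t x /\ ~ (exists i, rcons t i \in P /\ U (rcons t i) x).

Definition family_ok (L : nat -> (C -> Prop) -> Prop) (S : C -> Prop)
  (P : seq (seq nat)) (U : seq nat -> C -> Prop) : Prop :=
  (forall t, t \in P -> L 0 (U t)) /\
  (forall t i x, t \in P -> rcons t i \in P -> U (rcons t i) x -> U t x) /\
  (forall x, S x <-> exists t, t \in P /\ U t x).

Fixpoint determ (m : nat) : (nat -> (C -> Prop) -> Prop) -> (C -> Prop) ->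
    seq (seq nat) -> (seq nat -> Tk k m) -> Prop :=
  match m return (nat -> (C -> Prop) -> Prop) -> (C -> Prop) ->
                 seq (seq nat) -> (seq nat -> Tk k m) -> Prop with
  | 0 => fun L S P c =>
      exists U : seq nat -> C -> Prop, family_ok L S P U /\
        (forall t, t \in P -> forall x, tilde P U t x -> A x = c t)
  | m'.+1 => fun L S P c =>
      exists U : seq nat -> C -> Prop, family_ok L S P U /\
        (forall t, t \in P ->
           determ m' (relbase L (tilde P U t)) (tilde P U t)
                  (lt_nodes (c t)) (lt_label (c t)))
  end.

(* A ∈ 𝒞(F) for F ∈ F_k(n) = T_k(n-1)-forests. *)
Definition inCF (n : nat) (F : lforest (Tk k n.-1)) : Prop :=
  determ (n.-1) upbase (fun _ => True) (lf_nodes F) (lf_label F).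

End Preorders.

(* Main.v *)
Require Import Defs.
From mathcomp Require Import all_boot zify.
From Stdlib Require Import Classical ClassicalEpsilon.

Definition Lab (C : Type) (le : nat -> C -> C -> Prop) (k : nat) (A : C -> 'I_k)
  (m : nat) : nat -> (C -> Prop) -> C -> Tk k m -> Prop :=
  match m return nat -> (C -> Prop) -> C -> Tk k m -> Prop with
  | 0 => fun j D y l => l = A y
  | m'.+1 => fun j D y l => tle_pre C le k A m' j.+1 (fun z => D z /\ Defs.equiv C le j y z) l
  end.

Lemma tle_preE C le k A m j D (T : ltree (Tk k m)) :
  tle_pre C le k A m j D T <->
  exists phi : seq nat -> C,
    (forall x, x \in lt_nodes T -> D (phi x)) /\
    (forall x y, x \in lt_nodes T -> y \in lt_nodes T -> prefix x y -> le j (phi x) (phi y)) /\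
    (forall x, x \in lt_nodes T -> Lab C le k A m j D (phi x) (lt_label T x)).
Proof. by case: m T => [|m] T; split. Qed.

Definition Det (C : Type) (k : nat) (A : C -> 'I_k) (m : nat)
  (L : nat -> (C -> Prop) -> Prop) (P : seq (seq nat)) (U : seq nat -> C -> Prop)
  (t : seq nat) : Tk k m -> Prop :=
  match m return Tk k m -> Prop with
  | 0 => fun l => forall x, tilde C P U t x -> A x = l
  | m'.+1 => fun l => determ C k A m' (relbase C L (tilde C P U t)) (tilde C P U t)
                        (lt_nodes l) (lt_label l)
  end.

Lemma determE C k A m L S P c :
  determ C k A m L S P c <->
  exists U, family_ok C L S P U /\ (forall t, t \in P -> Det C k A m L P U t (c t)).
Proof. by case: m c => [|m] c; split. Qed.

Lemma tle_mono C le k A m : forall j (D D' : C -> Prop) T,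
  (forall y, D y -> D' y) -> tle_pre C le k A m j D T -> tle_pre C le k A m j D' T.
Proof.
elim: m => [|m IH] j D D' T sub /tle_preE [phi [h1 [h2 h3]]]; apply/tle_preE;
  exists phi; split => [x /h1|]; auto; split => // x /h3 /=.
apply: IH => z [? ?]; auto.
Qed.

Lemma tle_restrict C le k A m j (D Q : C -> Prop) (T : ltree (Tk k m)) phi :
  (forall x, x \in lt_nodes T -> D (phi x)) ->
  (forall x y, x \in lt_nodes T -> y \in lt_nodes T -> prefix x y -> le j (phi x) (phi y)) ->
  (forall x, x \in lt_nodes T -> Lab C le k A m j D (phi x) (lt_label T x)) ->
  (forall x, x \in lt_nodes T -> Q (phi x)) ->
  (forall y z, Q y -> Defs.equiv C le j y z -> Q z) ->
  tle_pre C le k A m j (fun y => D y /\ Q y) T.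
Proof.
case: m T phi => [|m] T phi h1 h2 h3 hQ cl; apply/tle_preE; exists phi;
  (split; first by move=> x hx; split; auto); split=> // x hx; move: (h3 x hx) => //=.
apply: tle_mono => z [hz he]; split => //; split => //; exact: cl (hQ x hx) he.
Qed.
Arguments tle_mono {C le k A m j D D' T}.

Definition HypL (C : Type) (le : nat -> C -> C -> Prop) (L : nat -> (C -> Prop) -> Prop)
  (j : nat) (S : C -> Prop) : Prop :=
  forall i X, L i X <-> exists B, upbase C le (i + j) B /\ (forall x, X x <-> S x /\ B x).

Lemma HypL_rel C le L j S (W : C -> Prop) :
  HypL C le L j S -> (forall y, W y -> S y) -> HypL C le (relbase C L W) j.+1 W.
Proof.
move=> hL hW i X; split.
- case=> B [/hL [B' [hB' eB]] eX]; exists B'; split; first by rewrite addnS -addSn.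
  move=> x; rewrite eX eB; intuition.
- case=> B' [hB' eX]; exists (fun x => S x /\ B' x); split.
    by apply/hL; exists B'; split => //; rewrite addSn -addnS.
  move=> x; rewrite eX; intuition.
Qed.

Lemma desc_ex C P (U : seq nat -> C -> Prop) t x :
  t \in P -> U t x -> exists t', t' \in P /\ prefix t t' /\ tilde C P U t' x.
Proof.
set N := \max_(u <- P) size u.
have hN : forall u, u \in P -> size u <= N.
  by move=> u hu; apply: (@leq_bigmax_seq _ P xpredT size u).
suff: forall d t, N - size t <= d -> t \in P -> U t x ->
    exists t', t' \in P /\ prefix t t' /\ tilde C P U t' x.
  by move=> h; apply: (h (N - size t)).
elim=> [|d IH] {}t hd hP hU.
- exists t; split => //; split; first exact: prefix_refl.
  split => // -[i [hi _]]; move: (hN _ hi); rewrite size_rcons; lia.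
- case: (classic (exists i, rcons t i \in P /\ U (rcons t i) x)).
  + case=> i [hi hUi]; case: (IH (rcons t i)) => //; first by rewrite size_rcons; lia.
    move=> t' [h1 [h2 h3]]; exists t'; split => //; split => //.
    exact: prefix_trans (prefix_rcons t i) h2.
  + by move=> hn; exists t; split => //; split; [exact: prefix_refl|].
Qed.

Fixpoint walk (f : seq nat -> seq nat -> seq nat) (t pre r : seq nat) : seq nat :=
  match r with [::] => t | i :: r' => walk f (f t (rcons pre i)) (rcons pre i) r' end.

Lemma walk_rcons f r : forall t pre i,
  walk f t pre (rcons r i) = f (walk f t pre r) (rcons (pre ++ r) i).
Proof.
elim: r => [|a r IH] t pre i /=; first by rewrite cats0.
by rewrite IH cat_rcons.
Qed.

Lemma descend C le L j S P U (V : seq (seq nat)) (phi : seq nat -> C) (D : C -> Prop) :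
  HypL C le L j S -> family_ok C L S P U -> is_tree V -> (forall y, D y -> S y) ->
  (forall x, x \in V -> D (phi x)) ->
  (forall x y, x \in V -> y \in V -> prefix x y -> le j (phi x) (phi y)) ->
  exists psi : seq nat -> seq nat,
    (forall x, x \in V -> psi x \in P /\ tilde C P U (psi x) (phi x)) /\
    (forall x y, x \in V -> y \in V -> prefix x y -> prefix (psi x) (psi y)).
Proof.
move=> hL [f1 [f2 f3]] [hV0 hVc] hDS hD hmono.
have [t0 [ht0 hU0]] : exists t0, t0 \in P /\ U t0 (phi [::]) by apply/f3; auto.
pose Q t y t' := t' \in P /\ prefix t t' /\ tilde C P U t' y.
pose desc t y := epsilon (inhabits t) (Q t y).
have descP : forall t y, t \in P -> U t y -> Q t y (desc t y).
  by move=> t y h1 h2; apply: epsilon_spec; apply: desc_ex.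
pose f t x := desc t (phi x).
pose psi x := walk f (f t0 [::]) [::] x.
have psiS : forall x i, psi (rcons x i) = f (psi x) (rcons x i).
  by move=> x i; rewrite /psi walk_rcons.
have clV : forall x i, rcons x i \in V -> x \in V.
  by move=> x i; rewrite -cats1 => /hVc.
have step : forall x i, rcons x i \in V -> psi x \in P -> U (psi x) (phi x) ->
    Q (psi x) (phi (rcons x i)) (psi (rcons x i)).
  move=> x i hi hP hU; rewrite psiS; apply: descP => //.
  have [B [hB1 hB2]] := (hL 0 _).1 (f1 _ hP).
  have hx := clV _ _ hi.
  have hle := hmono _ _ hx hi (prefix_rcons x i).
  move: hU; rewrite hB2 => -[_ hb].
  by apply/hB2; split; [apply/hDS/hD|apply: hB1 hb _].
have key : forall x, x \in V -> psi x \in P /\ tilde C P U (psi x) (phi x).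
  elim/last_ind => [|x i IH] hx.
  - by have [h1 [_ h3]] := descP _ _ ht0 hU0.
  - have [h1 h2] := IH (clV _ _ hx).
    by have [? [_ ?]] := step _ _ hx h1 h2.1.
exists psi; split => // x y hx hy /prefixP [w ew]; subst y.
elim/last_ind: w hy => [|w i IH] hy; first by rewrite cats0 prefix_refl.
rewrite -rcons_cat in hy *.
have hw := clV _ _ hy.
apply: prefix_trans (IH hw) _.
have [h1 h2] := key _ hw.
by have [_ [? _]] := step _ _ hy h1 h2.1.
Qed.

Arguments descend {C le L j S P U V phi D}.
Arguments HypL_rel {C le L j S W}.

Lemma fwd C le k A m : forall j S L P c D (T : ltree (Tk k m)),
  HypL C le L j S -> (forall y, D y -> S y) -> determ C k A m L S P c ->
  tle_pre C le k A m j D T -> hle (leh k m) (lt_nodes T) (lt_label T) P c.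
Proof.
elim: m => [|m IH] j S L P c D T hL hDS /determE [U [hfam hDet]]
  /tle_preE [phi [h1 [h2 h3]]];
  have [psi [hp hm]] := descend hL hfam (lt_tree T) hDS h1 h2;
  (exists psi; split; [by move=> x /hp []|split => //]) => x hx;
  have [hP ht] := hp x hx; have := hDet _ hP; move: (h3 x hx) => /=.
- by move=> -> /(_ _ ht).
- move=> hlab hdet; have [f1 [f2 f3]] := hfam.
  have hWS : forall y, tilde C P U (psi x) y -> S y.
    by move=> y [hy _]; apply/f3; exists (psi x).
  apply: (IH _ _ _ _ _ _ _ (HypL_rel hL hWS) _ hdet hlab).
  move=> z [hz [hxz hzx]].
  have [B [hB1 hB2]] := (hL 0 _).1 (f1 _ hP).
  have [hU hnc] := ht.
  split.
    move: hU; rewrite hB2 => -[_ hb]; apply/hB2; split; [exact: hDS|exact: hB1 hb hxz].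
  move=> [i [hi hUi]]; apply: hnc; exists i; split => //.
  have [B' [hB1' hB2']] := (hL 0 _).1 (f1 _ hi).
  move: hUi; rewrite hB2' => -[_ hb]; apply/hB2'; split; last exact: hB1' hb hzx.
  by apply: hDS; apply: h1.
Qed.

Lemma single_tree : is_tree [:: [::]].
Proof.
split; first by rewrite mem_seq1.
by move=> s t; rewrite mem_seq1 => /eqP/(congr1 size); rewrite size_cat mem_seq1;
  case: s => // _; rewrite eqxx.
Qed.

Definition tsingle {Q : Type} (l : Q) : ltree Q := LTree Q [:: [::]] (fun _ => l) single_tree.

Definition mnodes {Q : Type} (r : nat) (g : nat -> ltree Q) : seq (seq nat) :=
  [::] :: flatten [seq map (cons i) (lt_nodes (g i)) | i <- iota 0 r].

Lemma mnodesP {Q : Type} r (g : nat -> ltree Q) i w :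
  ((i :: w) \in mnodes r g) <-> (i < r /\ w \in lt_nodes (g i)).
Proof.
rewrite /mnodes in_cons /=; split.
- move=> /flattenP [s /mapP [i' hi' ->] /mapP [w' hw' [e1 e2]]]; subst.
  by move: hi'; rewrite mem_iota.
- move=> [hi hw]; apply/flattenP; exists (map (cons i) (lt_nodes (g i))).
    by apply/mapP; exists i => //; rewrite mem_iota.
  by apply/mapP; exists w.
Qed.

Lemma merge_tree {Q : Type} r (g : nat -> ltree Q) : is_tree (mnodes r g).
Proof.
split; first by rewrite /mnodes in_cons eqxx.
move=> [|i s] t; first by move=> _; rewrite /mnodes in_cons eqxx.
rewrite cat_cons => /mnodesP [hi hw]; apply/mnodesP; split => //.
exact: (lt_tree (g i)).2 hw.
Qed.

Definition mlabel {Q : Type} (l : Q) (g : nat -> ltree Q) (u : seq nat) : Q :=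
  match u with [::] => l | i :: w => lt_label (g i) w end.

Definition tmerge {Q : Type} (l : Q) r (g : nat -> ltree Q) : ltree Q :=
  LTree Q (mnodes r g) (mlabel l g) (merge_tree r g).

Definition embA {Q : Type} (leQ : Q -> Q -> Prop) (P : seq (seq nat)) (c : seq nat -> Q)
  (t : seq nat) (T : ltree Q) : Prop :=
  exists psi : seq nat -> seq nat,
    (forall u, u \in lt_nodes T -> psi u \in P /\ prefix t (psi u)) /\
    (forall x y, x \in lt_nodes T -> y \in lt_nodes T -> prefix x y -> prefix (psi x) (psi y)) /\
    (forall u, u \in lt_nodes T -> leQ (lt_label T u) (c (psi u))).

Lemma embA_weaken {Q : Type} leQ P c t t' (T : ltree Q) :
  prefix t t' -> embA leQ P c t' T -> embA leQ P c t T.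
Proof.
move=> htt [psi [h1 h2]]; exists psi; split => // u /h1 [? ?]; split => //.
exact: prefix_trans htt _.
Qed.

Lemma merge_emb {Q : Type} leQ P c (l : Q) r g (psi : seq nat -> seq nat) :
  (forall u, u \in mnodes r g -> psi u \in P) ->
  (forall x y, x \in mnodes r g -> y \in mnodes r g -> prefix x y -> prefix (psi x) (psi y)) ->
  (forall u, u \in mnodes r g -> leQ (mlabel l g u) (c (psi u))) ->
  forall i, i < r -> embA leQ P c (psi [::]) (g i).
Proof.
move=> h1 h2 h3 i hi; exists (fun w => psi (i :: w)).
have hm : forall w, w \in lt_nodes (g i) -> (i :: w) \in mnodes r g.
  by move=> w hw; apply/mnodesP.
have h0 : [::] \in mnodes r g by rewrite /mnodes in_cons eqxx.
split; [|split].
- by move=> u hu; split; [apply: h1; apply: hm|apply: h2 => //; apply: hm].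
- move=> x y hx hy hxy; apply: h2; try apply: hm => //.
  by rewrite prefix_cons eqxx.
- by move=> u hu; apply: (h3 (i :: u)); apply: hm.
Qed.
Arguments embA_weaken {Q leQ P c t t' T}.
Arguments merge_emb {Q leQ P c l r g psi}.

Lemma merge_tle C le k A m j D x (l : Tk k m) r g :
  le j x x -> D x -> (forall y, D y -> le j x y) -> Lab C le k A m j D x l ->
  (forall i, i < r -> tle_pre C le k A m j D (g i)) ->
  tle_pre C le k A m j D (tmerge l r g).
Proof.
move=> hxx hDx hup hl hg.
pose Pr i (phi : seq nat -> C) :=
  (forall x, x \in lt_nodes (g i) -> D (phi x)) /\
  (forall x y, x \in lt_nodes (g i) -> y \in lt_nodes (g i) -> prefix x y ->
     le j (phi x) (phi y)) /\
  (forall x, x \in lt_nodes (g i) -> Lab C le k A m j D (phi x) (lt_label (g i) x)).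
have ex : forall i, exists phi, i < r -> Pr i phi.
  move=> i; case: (ltnP i r) => hi.
    by have /tle_preE [phi hp] := hg i hi; exists phi.
  by exists (fun _ => x).
pose ph i := epsilon (inhabits (fun _ : seq nat => x)) (fun phi => i < r -> Pr i phi).
have phP : forall i, i < r -> Pr i (ph i) := fun i => epsilon_spec _ _ (ex i).
apply/tle_preE; exists (fun u => match u with [::] => x | i :: w => ph i w end).
split; [|split].
- case=> [|i w] hu //=; move/mnodesP: hu => [hi hw]; exact: (phP i hi).1 w hw.
- case=> [|i w] [|i' w'] hu hv //= hp.
  + by move/mnodesP: hv => [hi hw]; apply: hup; exact: (phP i' hi).1 w' hw.
  + move: hp; rewrite ?prefix_cons => /andP [/eqP ei hp]; subst i'.
    move/mnodesP: hu => [hi hw]; move/mnodesP: hv => [_ hw'].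
    exact: (phP i hi).2.1 w w' hw hw' hp.
- case=> [|i w] hu //=; move/mnodesP: hu => [hi hw]; exact: (phP i hi).2.2 w hw.
Qed.

Lemma single_tle C le k A m j D x (l : Tk k m) :
  le j x x -> D x -> Lab C le k A m j D x l -> tle_pre C le k A m j D (tsingle l).
Proof. by move=> hxx hD hl; apply/tle_preE; exists (fun _ => x). Qed.

Arguments merge_tle {C le k A m j D x l r g}.
Arguments single_tle {C le k A m j D x l}.

Lemma lab_ex C le k A n (hC : npreorder C le n) m : forall j D x,
  j + m < n -> D x -> exists l, Lab C le k A m j D x l.
Proof.
elim: m => [|m IH] j D x hjm hD; first by exists (A x).
have jn : j < n by lia.
have j1n : j.+1 < n by lia.
have hxx : Defs.equiv C le j x x by split; apply: (hC.1 j jn).1.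
have [l hl] := IH j.+1 (fun z => D z /\ Defs.equiv C le j x z) x ltac:(lia) (conj hD hxx).
exists (tsingle l) => /=; apply: single_tle; [exact: (hC.1 _ j1n).1|exact: conj hD hxx|exact: hl].
Qed.

Arguments lab_ex {C le k A n} hC {m j D x}.

Definition closedP (P : seq (seq nat)) : Prop :=
  forall s u, s != [::] -> s ++ u \in P -> s \in P.

Lemma bwd_core C le k A n (hC : npreorder C le n) m j S L P c :
  j + m < n -> HypL C le L j S -> closedP P ->
  (forall T, tle_pre C le k A m j S T -> hle (leh k m) (lt_nodes T) (lt_label T) P c) ->
  exists U, family_ok C L S P U /\
   (forall t, t \in P -> forall x, tilde C P U t x -> S x /\
     forall l, Lab C le k A m j (fun y => S y /\ le j x y) x l -> leh k m l (c t)).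
Proof.
move=> hjm hL hcl H.
have jn : j < n by lia.
have refl := (hC.1 j jn).1; have trans := (hC.1 j jn).2.
pose D0 x := fun y => S y /\ le j x y.
pose good t x := forall T, tle_pre C le k A m j (D0 x) T -> embA (leh k m) P c t T.
have build : forall x (l : Tk k m) (Bad : seq nat -> Prop), S x ->
    Lab C le k A m j (D0 x) x l -> (forall u, u \in P -> Bad u -> ~ good u x) ->
    exists M : ltree (Tk k m), tle_pre C le k A m j (D0 x) M /\ lt_label M [::] = l /\
      [::] \in lt_nodes M /\
      forall psi, (forall u, u \in lt_nodes M -> psi u \in P) ->
        (forall x y, x \in lt_nodes M -> y \in lt_nodes M -> prefix x y ->
            prefix (psi x) (psi y)) ->
        (forall u, u \in lt_nodes M -> leh k m (lt_label M u) (c (psi u))) ->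
        forall u, u \in P -> Bad u -> ~ prefix u (psi [::]).
  move=> x l Bad hSx hl hbad.
  have hD0 : D0 x x by split => //; apply: refl.
  have hsing := single_tle (refl x) hD0 hl.
  have ex : forall u, exists T, tle_pre C le k A m j (D0 x) T /\
      (u \in P -> Bad u -> ~ embA (leh k m) P c u T).
    move=> u; case: (classic (u \in P /\ Bad u)) => [[hu hb]|hn].
    + have hng := hbad u hu hb.
      have [T hT] := not_all_ex_not _ _ hng.
      have [h1 h2] := imply_to_and _ _ hT.
      by exists T.
    + by exists (tsingle l); split => // hu hb; case: hn.
  pose gT u := epsilon (inhabits (tsingle l)) (fun T => tle_pre C le k A m j (D0 x) T /\
      (u \in P -> Bad u -> ~ embA (leh k m) P c u T)).
  have gP : forall u, tle_pre C le k A m j (D0 x) (gT u) /\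
      (u \in P -> Bad u -> ~ embA (leh k m) P c u (gT u)) := fun u => epsilon_spec _ _ (ex u).
  exists (tmerge l (size P) (fun i => gT (nth [::] P i))); split; [|split => //; split].
  - apply: (merge_tle (x:=x)); [exact: refl|exact: hD0|by move=> y []|exact: hl|].
    by move=> i _; exact: (gP _).1.
  - by rewrite /= /mnodes in_cons eqxx.
  - move=> psi h1 h2 h3 u hu hb hp.
    have hi : index u P < size P by rewrite index_mem.
    have := merge_emb h1 h2 h3 _ hi; rewrite nth_index // => hemb.
    exact: (gP u).2 hu hb (embA_weaken hp hemb).
exists (fun t x => S x /\ good t x); split; first split; [|split|].
- move=> t ht; apply/hL; exists (good t); split; last by move=> x.
  move=> x y hx hxy T hT.
  apply: hx; apply: tle_mono hT => z [hz hyz]; split => //; exact: trans hxy hyz.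
- by move=> t i x ht hti [hx hg]; split => // T /hg; apply: embA_weaken; exact: prefix_rcons.
- move=> x; split; last by case=> t [_ []].
  move=> hSx; apply: NNPP => hn.
  have hD0 : D0 x x by split => //; apply: refl.
  have [l hl] : exists l, Lab C le k A m j (D0 x) x l := lab_ex hC hjm hD0.
  have [M [hM [_ [h0 hpsi]]]] := build x l (fun _ => True) hSx hl
    (fun u hu _ hg => hn (ex_intro _ u (conj hu (conj hSx hg)))).
  have [psi [h1 [h2 h3]]] := H M (tle_mono (fun y (hy : D0 x y) => hy.1) hM).
  exact: hpsi psi h1 h2 h3 (psi [::]) (h1 _ h0) I (prefix_refl _).
- move=> t ht x [[hSx hg] hnc]; split => // l hl.
  have hbad : forall u, u \in P -> (exists i, u = rcons t i) -> ~ good u x.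
    by move=> u hu [i e] hgu; apply: hnc; exists i; subst u; split => //; split.
  have [M [hM [hMl [h0 hpsi]]]] := build x l (fun u => exists i, u = rcons t i) hSx hl hbad.
  have [psi [h1 [h2 h3]]] := hg M hM.
  have [hP0 /prefixP [w ew]] := h1 _ h0.
  case: w ew => [|a w] ew.
    by move: (h3 _ h0); rewrite hMl ew cats0.
  have hu : rcons t a \in P.
    by apply: (hcl _ w); [rewrite -size_eq0 size_rcons|rewrite cat_rcons -ew].
  exfalso; apply: (hpsi psi (fun u hu => (h1 u hu).1) h2 h3 _ hu (ex_intro _ a erefl)).
  by rewrite ew -cat_rcons prefix_prefix.
Qed.

Arguments tle_restrict {C le k A m j D Q T phi}.

Lemma bwd C le k A n (hC : npreorder C le n) m : forall j S L P c,
  j + m < n -> HypL C le L j S -> closedP P ->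
  (forall T, tle_pre C le k A m j S T -> hle (leh k m) (lt_nodes T) (lt_label T) P c) ->
  determ C k A m L S P c.
Proof.
elim: m => [|m IH] j S L P c hjm hL hcl H;
  have [U [hfam hcore]] := bwd_core _ _ _ _ _ hC _ _ _ _ _ _ hjm hL hcl H;
  apply/determE; exists U; split => // t ht /=.
- by move=> x hx; have [hSx hl] := hcore t ht x hx; exact: hl (A x) erefl.
- have hWS : forall y, tilde C P U t y -> S y := fun y hy => (hcore t ht y hy).1.
  have jn : j < n by lia.
  have j1n : j.+1 < n by lia.
  have trans := (hC.1 j jn).2.
  apply: (IH j.+1 _ _ _ _ ltac:(lia) (HypL_rel hL hWS)).
    by move=> s u hs h; exact: (lt_tree (c t)).2 s u h.
  move=> T' /tle_preE [phi [h1 [h2 h3]]].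
  have hr := (lt_tree T').1.
  have [_ hl] := hcore t ht _ (h1 _ hr).
  apply: hl => /=.
  set x' := phi [::].
  apply: (tle_mono (D := fun y => tilde C P U t y /\
                                 (le j x' y /\ Defs.equiv C le j x' y))).
    by move=> y [hy [h4 h5]]; split => //; split => //; exact: hWS.
  apply: (tle_restrict h1 h2 h3).
  + move=> u hu; have he := hC.2 j j1n _ _ (h2 _ _ hr hu (prefix0s u)).
    by split => //; case: he.
  + move=> y z [hxy [e1 e2]] hyz; have [e3 e4] := hC.2 j j1n _ _ hyz.1.
    split; first exact: trans hxy e3.
    by split; [exact: trans hxy e3|exact: trans e4 e2].
Qed.

Theorem theorem3p8 (n k : nat) (hn : 0 < n) (hk : 2 <= k)
  (C : Type) (le : nat -> C -> C -> Prop) (hC : npreorder C le n)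
  (A : C -> 'I_k) (F : lforest (Tk k n.-1)) :
  inCF C le k A n F <->
  (forall T : ltree (Tk k n.-1), tle C le k A n T -> hle_TF k (n.-1) T F).
Proof.
have hL : HypL C le (upbase C le) 0 (fun _ => True).
  move=> i X; split.
  - by move=> hX; exists X; split; [rewrite addn0|move=> x; split => // -[]].
  - case=> B [hB e] x y hx hxy; apply/e; split => //.
    by apply: (hB x y) => //; [have := (e x).1 hx; case|rewrite addn0].
split.
- move=> hF T hT; exact: (fwd _ _ _ _ _ _ _ _ _ _ _ _ hL (fun y h => h) hF hT).
- move=> H; apply: (bwd _ _ _ _ _ hC _ 0 _ _ _ _ _ hL _ H); first lia.
  by move=> s u hs h; exact: (lf_forest F).2 s u hs h.
Qed.
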